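(* Let $\Gamma$ be a finitely generated infinite simple group, $S$ a finite generating set of $\Gamma$ (not containing the identity), and suppose $G=\mathrm{Cay}(\Gamma,S)$ is a graphical regular representation of $\Gamma$. Then every periodic vertex-coloring of $G$ is trivial. Moreover, if $S$ contains an element of order $2$, then $G$ does not have a periodic orientation.
   Context: The Cayley graph $\mathrm{Cay}(\Gamma,S)$ has vertex set $\Gamma$, with $g,h$ adjacent iff $hg^{-1}\in S\cup S^{-1}$; $\Gamma$ acts on it by right multiplication $h\mapsto hg$. It is a graphical regular representation of $\Gamma$ if these right multiplications are all of its automorphisms, i.e. $\mathrm{Aut}(G)=\Gamma$. A vertex-coloring is trivial if within each connected component all vertices get the same color. A vertex-coloring (resp. orientation) of $G$ is periodic if the subgroup of automorphisms of $G$ preserving the colors of vertices (resp. the orientation of every edge) has finitely many orbits on $V(G)$. *)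

(* Defs.v *)
From Stdlib Require Import List Relations.
Import ListNotations.
Set Implicit Arguments.

Record group := Group {
  carrier :> Type;
  mul : carrier -> carrier -> carrier;
  one : carrier;
  inv : carrier -> carrier;
  mulA : forall x y z, mul x (mul y z) = mul (mul x y) z;
  mul1g : forall x, mul one x = x;
  mulg1 : forall x, mul x one = x;
  mulVg : forall x, mul (inv x) x = one;
  mulgV : forall x, mul x (inv x) = one
}.

Section GroupDefs.
Context {G : group}.

Definition finite_group : Prop := exists l : list G, forall x : G, In x l.
Definition infinite_group : Prop := ~ finite_group.

Definition generates (S : list G) : Prop :=
  forall P : G -> Prop,
    P (one G) ->
    (forall s, In s S -> P s) ->
    (forall x y, P x -> P y -> P (mul G x y)) ->
    (forall x, P x -> P (inv G x)) ->
    forall x, P x.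

Definition finitely_generated : Prop := exists S : list G, generates S.

Definition normal_subgroup (N : G -> Prop) : Prop :=
  N (one G) /\
  (forall x y, N x -> N y -> N (mul G x y)) /\
  (forall x, N x -> N (inv G x)) /\
  (forall g x, N x -> N (mul G (mul G (inv G g) x) g)).

Definition simple_group : Prop :=
  (exists x : G, x <> one G) /\
  forall N, normal_subgroup N ->
    (forall x, N x -> x = one G) \/ (forall x, N x).

Definition order_two (s : G) : Prop := s <> one G /\ mul G s s = one G.

Definition cay_adj (S : list G) (g h : G) : Prop :=
  In (mul G h (inv G g)) S \/ In (inv G (mul G h (inv G g))) S.

Definition is_aut (S : list G) (f : G -> G) : Prop :=
  (exists f' : G -> G, (forall x, f' (f x) = x) /\ (forall y, f (f' y) = y)) /\
  (forall x y, cay_adj S x y <-> cay_adj S (f x) (f y)).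

Definition GRR (S : list G) : Prop :=
  forall f, is_aut S f -> exists g : G, forall h, f h = mul G h g.

Definition cay_connected (S : list G) : G -> G -> Prop :=
  clos_refl_trans G (cay_adj S).

Definition trivial_coloring (S : list G) (C : Type) (c : G -> C) : Prop :=
  forall x y, cay_connected S x y -> c x = c y.

Definition finitely_many_orbits (H : (G -> G) -> Prop) : Prop :=
  exists reps : list G, forall v : G,
    exists r, In r reps /\ exists f, H f /\ f r = v.

Definition periodic_coloring (S : list G) (C : Type) (c : G -> C) : Prop :=
  finitely_many_orbits (fun f => is_aut S f /\ forall x, c (f x) = c x).

Definition orientation (S : list G) (o : G -> G -> Prop) : Prop :=
  (forall x y, o x y -> cay_adj S x y) /\
  (forall x y, cay_adj S x y -> (o x y \/ o y x) /\ ~ (o x y /\ o y x)).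

Definition periodic_orientation (S : list G) (o : G -> G -> Prop) : Prop :=
  orientation S o /\
  finitely_many_orbits (fun f => is_aut S f /\ forall x y, o x y -> o (f x) (f y)).

End GroupDefs.

(* Main.v *)
Require Import Defs.
From Stdlib Require Import List Relations Classical ClassicalEpsilon.
Import ListNotations.

Section Grp.
Variable G : group.
Local Notation "x * y" := (mul G x y).
Local Notation "1" := (one G).
Local Notation "x ^-1" := (inv G x) (at level 3).

Lemma mulKg (a b : G) : a^-1 * (a * b) = b.
Proof. rewrite mulA, mulVg, mul1g; reflexivity. Qed.
Lemma mulKVg (a b : G) : a * (a^-1 * b) = b.
Proof. rewrite mulA, mulgV, mul1g; reflexivity. Qed.
Lemma mulgK (a b : G) : (a * b) * b^-1 = a.
Proof. rewrite <- mulA, mulgV, mulg1; reflexivity. Qed.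
Lemma inv_uniq (x y : G) : x * y = 1 -> x^-1 = y.
Proof. intro H. rewrite <- (mulKg x y), H, mulg1. reflexivity. Qed.
Lemma inv_one : (1:G)^-1 = 1.
Proof. apply inv_uniq. apply mul1g. Qed.
Lemma invK (x : G) : (x^-1)^-1 = x.
Proof. apply inv_uniq. apply mulVg. Qed.
Lemma invM (a b : G) : (a * b)^-1 = b^-1 * a^-1.
Proof. apply inv_uniq. rewrite mulA, mulgK, mulgV. reflexivity. Qed.
Lemma conjM (y a b : G) : y^-1 * (a * b) * y = (y^-1 * a * y) * (y^-1 * b * y).
Proof.
  rewrite !mulA. f_equal. rewrite <- (mulA G (y^-1 * a * y)), mulA, mulgK. reflexivity.
Qed.
Lemma conjV (y a : G) : y^-1 * a^-1 * y = (y^-1 * a * y)^-1.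
Proof. rewrite !invM, invK, mulA. reflexivity. Qed.
Lemma conjJ (g y x : G) : y^-1 * (g^-1 * x * g) * y = (g * y)^-1 * x * (g * y).
Proof. rewrite invM, !mulA. reflexivity. Qed.
Lemma conj1 (x : G) : 1^-1 * x * 1 = x.
Proof. rewrite inv_one, mul1g, mulg1. reflexivity. Qed.
Lemma conj_one (y : G) : y^-1 * 1 * y = 1.
Proof. rewrite mulg1, mulVg. reflexivity. Qed.

Fixpoint allseq (l : list G) (n : nat) : list (list G) :=
  match n with
  | O => [[]]
  | S n => flat_map (fun a => map (cons a) (allseq l n)) l
  end.

Lemma in_allseq (l m : list G) : (forall a, In a m -> In a l) -> In m (allseq l (length m)).
Proof.
  induction m as [|a m IH]; intro H; simpl. left; reflexivity.
  apply in_flat_map. exists a. split. apply H; left; reflexivity.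
  apply in_map. apply IH. intros b Hb; apply H; right; exact Hb.
Qed.

Lemma fin_inj (B : Type) (phi : G -> B) (L : list B) :
  (forall x y, phi x = phi y -> x = y) -> (forall x, In (phi x) L) -> @finite_group G.
Proof.
  intros Hinj HL.
  assert (K : forall L', exists l : list G, forall x, In (phi x) L' -> In x l).
  { induction L' as [|b L' IH].
    - exists []. intros x [].
    - destruct IH as [l Hl]. destruct (classic (exists x, phi x = b)) as [[x0 Hx0]|Hn].
      + exists (x0 :: l). intros x [Hx|Hx]. left. apply Hinj. congruence. right; auto.
      + exists l. intros x [Hx|Hx]. exfalso; apply Hn; exists x; symmetry; exact Hx. auto. }
  destruct (K L) as [l Hl]. exists l. intro x; apply Hl, HL.
Qed.

Lemma map_eq_in (A : Type) (f g : G -> A) (l : list G) :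
  map f l = map g l -> forall r, In r l -> f r = g r.
Proof.
  induction l as [|a l IH]; simpl; intros H r Hr. destruct Hr.
  injection H as H1 H2. destruct Hr as [<-|Hr]; auto.
Qed.

Lemma fin_index_all (P : G -> Prop) (P1 : P 1)
  (PM : forall a b, P a -> P b -> P (a * b)) (PV : forall a, P a -> P (a^-1))
  (reps : list G)
  (Hreps : forall v, exists r, In r reps /\ exists g, P g /\ r * g = v) :
  @infinite_group G -> @simple_group G -> forall g, P g.
Proof.
  intros Hinf [_ Hsimp].
  set (N := fun x : G => forall y, P (y^-1 * x * y)).
  assert (HN : normal_subgroup N).
  { unfold N; split; [|split; [|split]].
    - intro y. rewrite conj_one. exact P1.
    - intros a b Ha Hb y. rewrite conjM. auto.
    - intros a Ha y. rewrite conjV. auto.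
    - intros g x Hx y. rewrite conjJ. auto. }
  destruct (Hsimp N HN) as [Htriv|Hall].
  2:{ intro g. rewrite <- conj1. apply Hall. }
  exfalso. apply Hinf.
  assert (Hr : forall v, {r | In r reps /\ P (r^-1 * v)}).
  { intro v. apply constructive_indefinite_description.
    destruct (Hreps v) as [r [Hr [g [Pg Hg]]]]. exists r. split; auto.
    rewrite <- Hg, mulKg. exact Pg. }
  set (rp := fun v => proj1_sig (Hr v)).
  assert (rpIn : forall v, In (rp v) reps) by (intro v; exact (proj1 (proj2_sig (Hr v)))).
  assert (rpP : forall v, P ((rp v)^-1 * v)) by (intro v; exact (proj2 (proj2_sig (Hr v)))).
  apply (fin_inj _ (fun x => map (fun r => rp (x * r)) reps) (allseq reps (length reps))).
  - intros x y Hxy.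
    assert (Hc : N (y^-1 * x)).
    { intro w. destruct (Hreps w) as [r [Hr' [h [Ph Hh]]]]. subst w.
      pose proof (map_eq_in _ _ _ _ Hxy r Hr') as E. simpl in E.
      pose proof (rpP (x * r)) as Px. pose proof (rpP (y * r)) as Py.
      rewrite E in Px.
      assert (Pz : P (r^-1 * (y^-1 * x) * r)).
      { pose proof (PM _ _ (PV _ Py) Px) as Q.
        rewrite invM, invK, <- !mulA, mulKVg, invM in Q.
        rewrite <- !mulA. rewrite <- !mulA in Q. exact Q. }
      rewrite <- conjJ. apply PM. apply PM. apply PV; exact Ph. exact Pz.
      exact Ph. }
    apply Htriv in Hc. rewrite <- (mulKVg y x), Hc, mulg1. reflexivity.
  - intro x. replace (length reps) with (length (map (fun r => rp (x * r)) reps))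
      by apply length_map.
    apply in_allseq. intros a Ha. apply in_map_iff in Ha. destruct Ha as [r [<- _]]. apply rpIn.
Qed.
End Grp.

Lemma adj_rmul (G : group) (S : list G) (x y g : G) :
  cay_adj S x y -> cay_adj S (mul G x g) (mul G y g).
Proof.
  unfold cay_adj. rewrite (invM G x g), mulA, mulgK. auto.
Qed.

Theorem lemma3p2 (G : group) (S : list G) :
  @finitely_generated G -> @infinite_group G -> @simple_group G ->
  generates S -> ~ In (one G) S -> GRR S ->
  (forall (C : Type) (c : G -> C), periodic_coloring S c -> trivial_coloring S c) /\
  ((exists s, In s S /\ order_two s) ->
     ~ exists o : G -> G -> Prop, periodic_orientation S o).
Proof.
  intros _ Hinf Hsimp _ _ Hgrr. split.
  - intros C c [reps Hreps].
    assert (Hall : forall g x, c (mul G x g) = c x).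
    { apply (fin_index_all G (fun g => forall x, c (mul G x g) = c x)) with (reps := reps);
        auto.
      - intro x. rewrite mulg1. reflexivity.
      - intros a b Ha Hb x. rewrite mulA, Hb, Ha. reflexivity.
      - intros a Ha x. rewrite <- (Ha (mul G x (inv G a))), <- mulA, mulVg, mulg1.
        reflexivity.
      - intro v. destruct (Hreps v) as [r [Hr [f [[Hf Hc] Hfr]]]].
        destruct (Hgrr f Hf) as [g Hg]. exists r. split; auto. exists g. split.
        + intro x. rewrite <- Hg. apply Hc.
        + rewrite <- Hg. exact Hfr. }
    intros x y _. rewrite <- (mul1g G x), <- (mul1g G y), !Hall. reflexivity.
  - intros [s [Hs [_ Hss]]] [o [[Ho1 Ho2] [reps Hreps]]].
    assert (Hall : forall g x y, o x y -> o (mul G x g) (mul G y g)).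
    { apply (fin_index_all G (fun g => forall x y, o x y -> o (mul G x g) (mul G y g)))
        with (reps := reps); auto.
      - intros x y H. rewrite !mulg1. exact H.
      - intros a b Ha Hb x y H. rewrite !mulA. auto.
      - intros a Ha x y H.
        pose proof (adj_rmul G S x y (inv G a) (Ho1 x y H)) as Hadj.
        destruct (Ho2 _ _ Hadj) as [[H1|H1] _]; auto.
        exfalso. apply Ha in H1. rewrite <- !mulA, !mulVg, !mulg1 in H1.
        apply (proj2 (Ho2 x y (Ho1 x y H))). auto.
      - intro v. destruct (Hreps v) as [r [Hr [f [[Hf Hc] Hfr]]]].
        destruct (Hgrr f Hf) as [g Hg]. exists r. split; auto. exists g. split.
        + intros x y H. rewrite <- !Hg. apply Hc; exact H.
        + rewrite <- Hg. exact Hfr. }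
    assert (Hadj : cay_adj S (one G) s).
    { left. rewrite inv_one, mulg1. exact Hs. }
    destruct (Ho2 _ _ Hadj) as [[H1|H1] Hn]; apply Hn.
    + split; auto. pose proof (Hall s _ _ H1) as H2. rewrite mul1g, Hss in H2. exact H2.
    + split; auto. pose proof (Hall s _ _ H1) as H2. rewrite mul1g, Hss in H2. exact H2.
Qed.
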